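(* Consider the distributed detection model in the context with $\alpha\le 0.5$. For $(P_{1,0},P_{0,1})\in[0,1]^2$ with $\alpha(P_{1,0}+P_{0,1})<1$, let $$T(P_{1,0},P_{0,1})=\frac{\ln\left[\frac{P_0}{P_1}\left(\frac{1-\pi_{1,0}}{1-\pi_{1,1}}\right)^{N}\right]}{\ln\left[\frac{\pi_{1,1}(1-\pi_{1,0})}{\pi_{1,0}(1-\pi_{1,1})}\right]},$$ and let $\Phi(P_{1,0},P_{0,1})$ denote the error probability $P_E$ of the $K$-out-of-$N$ fusion rule with $K=\lceil T(P_{1,0},P_{0,1})\rceil$. Then $\Phi$ is a monotonically increasing function of $P_{1,0}$ when $P_{0,1}$ is held fixed, and a monotonically increasing function of $P_{0,1}$ when $P_{1,0}$ is held fixed.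
   Context: Binary hypothesis test between $H_0$ and $H_1$ with priors $P_0,P_1\in(0,1)$, $P_0+P_1=1$. There are $N$ sensors, each using the same fixed local threshold, so that conditionally on the hypothesis their local decisions $v_i\in\{0,1\}$ are i.i.d. with $P(v_i=1\mid H_1)=P_d$, $P(v_i=1\mid H_0)=P_f$, where $0<P_f<P_d<1$. Each sensor independently is Byzantine with probability $\alpha\in[0,1]$. Honest nodes send $u_i=v_i$; a Byzantine node sends $u_i=1$ with probability $P_{1,0}$ when $v_i=0$ and sends $u_i=0$ with probability $P_{0,1}$ when $v_i=1$. Hence conditionally on $H_j$ the $u_i$ are i.i.d. with $P(u_i=1\mid H_0)=\pi_{1,0}=\alpha(P_{1,0}(1-P_f)+(1-P_{0,1})P_f)+(1-\alpha)P_f$ and $P(u_i=1\mid H_1)=\pi_{1,1}=\alpha(P_{1,0}(1-P_d)+(1-P_{0,1})P_d)+(1-\alpha)P_d$. A $K$-out-of-$N$ fusion rule decides $H_1$ iff at least $K$ of the $u_i$ equal $1$; its error probability is $P_E=P_0Q_F+P_1(1-Q_D)$ with $Q_F=\sum_{i=K}^N\binom{N}{i}\pi_{1,0}^i(1-\pi_{1,0})^{N-i}$ and $Q_D=\sum_{i=K}^N\binom{N}{i}\pi_{1,1}^i(1-\pi_{1,1})^{N-i}$. The rule with $K=\lceil T\rceil$ is the optimal (MAP) fusion rule when $\alpha(P_{1,0}+P_{0,1})<1$. *)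

(* Defs.v *)
From HB Require Import structures.
From mathcomp Require Import all_boot all_order all_algebra.
From mathcomp Require Import reals exp.
Set Implicit Arguments. Unset Strict Implicit. Unset Printing Implicit Defensive.
Import Order.TTheory GRing.Theory Num.Theory.
Local Open Scope ring_scope.

Section DefsSec.
Variable R : realType.

(* P(u_i = 1 | H_0) *)
Definition pi10 (alpha P10 P01 Pf : R) : R :=
  alpha * (P10 * (1 - Pf) + (1 - P01) * Pf) + (1 - alpha) * Pf.

(* P(u_i = 1 | H_1) *)
Definition pi11 (alpha P10 P01 Pd : R) : R :=
  alpha * (P10 * (1 - Pd) + (1 - P01) * Pd) + (1 - alpha) * Pd.

(* Probability that at least K (an integer, possibly <= 0 or > N) of N i.i.d.
   Bernoulli(p) variables equal 1: sum_{i=K}^{N} C(N,i) p^i (1-p)^(N-i),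
   where the summation range is restricted to 0 <= i <= N. *)
Definition Qrule (N : nat) (K : int) (p : R) : R :=
  \sum_(i < N.+1 | (K <= (i : nat)%:Z)%R)
    ('C(N, i))%:R * p ^+ i * (1 - p) ^+ (N - i).

Definition PE (N : nat) (K : int) (P0 P1 q10 q11 : R) : R :=
  P0 * Qrule N K q10 + P1 * (1 - Qrule N K q11).

Definition Tthr (N : nat) (P0 P1 Pd Pf alpha P10 P01 : R) : R :=
  let a := pi10 alpha P10 P01 Pf in
  let b := pi11 alpha P10 P01 Pd in
  ln (P0 / P1 * ((1 - a) / (1 - b)) ^+ N) / ln ((b * (1 - a)) / (a * (1 - b))).

Definition Phi (N : nat) (P0 P1 Pd Pf alpha P10 P01 : R) : R :=
  PE N (Num.ceil (Tthr N P0 P1 Pd Pf alpha P10 P01)) P0 P1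
     (pi10 alpha P10 P01 Pf) (pi11 alpha P10 P01 Pd).

End DefsSec.

(* Main.v *)
Require Import Defs.
From HB Require Import structures.
From mathcomp Require Import all_boot all_order all_algebra.
From mathcomp Require Import reals exp.
From mathcomp Require Import ring lra.
Import Order.TTheory GRing.Theory Num.Theory.
Local Open Scope ring_scope.

Section Aux.
Variable R : realType.

Fixpoint E (p q : R) (n : nat) (c0 c1 : R) : R :=
  match n with
  | 0 => Num.min c0 c1
  | n'.+1 => E p q n' (c0 * (1 - p)) (c1 * (1 - q)) + E p q n' (c0 * p) (c1 * q)
  end.

Lemma min_hom (t x y : R) : 0 <= t -> Num.min (t * x) (t * y) = t * Num.min x y.
Proof.
move=> t0; case: (leP x y) => h.
  by rewrite min_l //; nra.
have h' := ltW h.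
by rewrite min_r //; nra.
Qed.

Lemma min_sup (x y z w : R) : Num.min x z + Num.min y w <= Num.min (x + y) (z + w).
Proof.
rewrite le_min; apply/andP; split; apply: lerD; rewrite ?ge_min ?lexx ?orbT //.
Qed.

Lemma E_hom p q n : forall t c0 c1 : R, 0 <= t -> E p q n (t * c0) (t * c1) = t * E p q n c0 c1.
Proof.
elim: n => [|n IH] t c0 c1 t0 /=; first exact: min_hom.
by rewrite -!mulrA !IH // -mulrDr.
Qed.

Lemma E_sup p q n : forall a0 a1 b0 b1 : R,
  E p q n a0 a1 + E p q n b0 b1 <= E p q n (a0 + b0) (a1 + b1).
Proof.
elim: n => [|n IH] a0 a1 b0 b1 /=; first exact: min_sup.
rewrite !mulrDl.
apply: le_trans (lerD (IH _ _ _ _) (IH _ _ _ _)).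
by rewrite addrACA.
Qed.

Lemma E_garble p q d e n : 0 <= d <= 1 -> 0 <= e <= 1 -> forall c0 c1 : R,
  E p q n c0 c1 <= E (p * (1 - e) + (1 - p) * d) (q * (1 - e) + (1 - q) * d) n c0 c1.
Proof.
move=> /andP[d0 d1] /andP[e0 e1].
elim: n => [|n IH] c0 c1 /=; first by [].
apply: le_trans (lerD (IH _ _) (IH _ _)).
set X0 := c0 * (1 - p); set Y0 := c1 * (1 - q); set X1 := c0 * p; set Y1 := c1 * q.
have -> : c0 * (1 - (p * (1 - e) + (1 - p) * d)) = (1 - d) * X0 + e * X1 by rewrite /X0 /X1; ring.
have -> : c1 * (1 - (q * (1 - e) + (1 - q) * d)) = (1 - d) * Y0 + e * Y1 by rewrite /Y0 /Y1; ring.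
have -> : c0 * (p * (1 - e) + (1 - p) * d) = d * X0 + (1 - e) * X1 by rewrite /X0 /X1; ring.
have -> : c1 * (q * (1 - e) + (1 - q) * d) = d * Y0 + (1 - e) * Y1 by rewrite /Y0 /Y1; ring.
apply: le_trans (lerD (E_sup _ _ _ _ _ _ _) (E_sup _ _ _ _ _ _ _)).
rewrite !E_hom ?subr_ge0 //.
have -> : E p q n X0 Y0 + E p q n X1 Y1 =
  ((1 - d) * E p q n X0 Y0 + e * E p q n X1 Y1) + (d * E p q n X0 Y0 + (1 - e) * E p q n X1 Y1) by ring.
by [].
Qed.


Definition Mt (p q : R) (n : nat) (c0 c1 : R) (k : nat) :=
  Num.min (c0 * (p ^+ k * (1 - p) ^+ (n - k))) (c1 * (q ^+ k * (1 - q) ^+ (n - k))).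

Lemma E_sum p q n : forall c0 c1 : R,
  E p q n c0 c1 = \sum_(k < n.+1) ('C(n, k))%:R * Mt p q n c0 c1 k.
Proof.
elim: n => [|n IH] c0 c1.
  by rewrite /= big_ord_recl big_ord0 /Mt /= !expr0 !mulr1 addr0 mul1r.
rewrite /= !IH.
rewrite [in RHS]big_ord_recl /=.
under [in RHS]eq_bigr => i _ do rewrite binS natrD mulrDl.
rewrite big_split /= addrA; congr (_ + _).
  rewrite [in RHS]big_ord_recr /= (bin_small (ltnSn n)) mul0r addr0.
  rewrite [LHS]big_ord_recl /= !bin0.
  have -> : Mt p q n (c0 * (1 - p)) (c1 * (1 - q)) 0 = Mt p q n.+1 c0 c1 0.
    by rewrite /Mt !subn0 !expr0 !mul1r -!mulrA -!exprS.
  congr (_ + _); apply: eq_bigr => i _.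
  rewrite /bump /=.
  have hi : (i < n)%N := ltn_ord i.
  congr (_ * _); rewrite /Mt.
  rewrite subSS.
  have -> : (n - i = (n - i.+1).+1)%N by rewrite subnSK.
  by rewrite !exprS; congr (Num.min _ _); ring.
apply: eq_bigr => i _; congr (_ * _); rewrite /Mt subSS.
by rewrite !exprS; congr (Num.min _ _); ring.
Qed.


Lemma thr_iff (N k : nat) (P0 P1 a b : R) : (k <= N)%N ->
  0 < P0 -> 0 < P1 -> 0 < a -> a < b -> b < 1 ->
  (ln (P0 / P1 * ((1 - a) / (1 - b)) ^+ N) / ln ((b * (1 - a)) / (a * (1 - b))) <= k%:R)
  = (P0 * (a ^+ k * (1 - a) ^+ (N - k)) <= P1 * (b ^+ k * (1 - b) ^+ (N - k))).
Proof.
move=> kN hP0 hP1 ha hab hb.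
have hb0 : 0 < b by apply: lt_trans hab.
have ha1 : 0 < 1 - a by rewrite subr_gt0; apply: lt_trans hb.
have hb1 : 0 < 1 - b by rewrite subr_gt0.
set Y := (b * (1 - a)) / (a * (1 - b)).
set X := P0 / P1 * ((1 - a) / (1 - b)) ^+ N.
have hY : 1 < Y.
  rewrite /Y ltr_pdivlMr ?mulr_gt0 // mul1r; nra.
have hY0 : 0 < Y by apply: lt_trans hY.
have hX : 0 < X by rewrite /X !mulr_gt0 ?invr_gt0 ?exprn_gt0 ?divr_gt0.
rewrite ler_pdivrMr ?ln_gt0 // mulr_natl -lnXn //.
rewrite ler_ln ?posrE ?exprn_gt0 //.
set W := P1 * a ^+ k * (1 - b) ^+ N / (1 - a) ^+ k.
have hW : 0 < W by rewrite /W !mulr_gt0 ?invr_gt0 ?exprn_gt0.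
rewrite -(ler_pM2r hW).
have eA : (1 - a) ^+ N = (1 - a) ^+ k * (1 - a) ^+ (N - k) by rewrite -exprD subnKC.
have eB : (1 - b) ^+ N = (1 - b) ^+ k * (1 - b) ^+ (N - k) by rewrite -exprD subnKC.
have -> : X * W = P0 * (a ^+ k * (1 - a) ^+ (N - k)).
  rewrite /X /W expr_div_n eA eB.
  field; repeat (apply/andP; split); by rewrite ?expf_neq0 // gt_eqF.
have -> : Y ^+ k * W = P1 * (b ^+ k * (1 - b) ^+ (N - k)).
  rewrite /Y /W !expr_div_n !exprMn eB.
  field; repeat (apply/andP; split); by rewrite ?expf_neq0 // gt_eqF.
by [].
Qed.


Lemma PE_E (N : nat) (P0 P1 a b : R) :
  0 < P0 -> 0 < P1 -> 0 < a -> a < b -> b < 1 ->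
  PE N (Num.ceil (ln (P0 / P1 * ((1 - a) / (1 - b)) ^+ N) / ln ((b * (1 - a)) / (a * (1 - b)))))
     P0 P1 a b = E a b N P0 P1.
Proof.
move=> hP0 hP1 ha hab hb.
set T := _ / _.
rewrite E_sum /PE /Qrule.
have e : ((1 - b) + b) ^+ N = 1 by rewrite subrK expr1n.
rewrite exprDn in e.
have h1 : \sum_(i < N.+1) ('C(N, i))%:R * b ^+ i * (1 - b) ^+ (N - i) = 1.
  rewrite -[RHS]e; apply: eq_bigr => i _; rewrite -mulr_natl; ring.
rewrite -[X in P1 * (X - _)]h1.
rewrite [X in P1 * (X - _)](bigID (fun i : 'I_N.+1 => (Num.ceil T <= (i : nat)%:Z)%R)) /=.
rewrite [X in P1 * X]addrAC subrr add0r !mulr_sumr.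
rewrite [X in X + _]big_mkcond [X in _ + X]big_mkcond /=.
rewrite -big_split /=; apply: eq_bigr => i _.
have iN : (i <= N)%N by rewrite -ltnS.
have := @thr_iff N i P0 P1 a b iN hP0 hP1 ha hab hb; rewrite -/T => hT.
rewrite ceil_le_int -[(i%:Z)%:~R]/(i%:R) hT /Mt.
case: leP => h.
  by rewrite /= addr0; ring.
by rewrite /= add0r; ring.
Qed.


Lemma pi_props (Pd Pf alpha P10 P01 : R) :
  0 < Pf -> Pf < Pd -> Pd < 1 -> 0 <= alpha ->
  0 <= P10 <= 1 -> 0 <= P01 <= 1 -> alpha * (P10 + P01) < 1 ->
  [/\ 0 < pi10 alpha P10 P01 Pf, pi10 alpha P10 P01 Pf < pi11 alpha P10 P01 Pd
    & pi11 alpha P10 P01 Pd < 1].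
Proof.
move=> hf hfd hd ha /andP[h1 h1'] /andP[h2 h2'] hs.
have hA : 0 <= alpha * P10 by rewrite mulr_ge0.
have hB : 0 <= alpha * P01 by rewrite mulr_ge0.
have hc : 0 < 1 - alpha * P10 - alpha * P01 by rewrite mulrDr in hs; lra.
split.
- have -> : pi10 alpha P10 P01 Pf = Pf * (1 - alpha * P10 - alpha * P01) + alpha * P10
    by rewrite /pi10; ring.
  by rewrite ltr_wpDr // mulr_gt0.
- rewrite -subr_gt0.
  have -> : pi11 alpha P10 P01 Pd - pi10 alpha P10 P01 Pf = (Pd - Pf) * (1 - alpha * P10 - alpha * P01)
    by rewrite /pi10 /pi11; ring.
  by rewrite mulr_gt0 // subr_gt0.
- rewrite -subr_gt0.
  have -> : 1 - pi11 alpha P10 P01 Pd = (1 - Pd) * (1 - alpha * P10 - alpha * P01) + alpha * P01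
    by rewrite /pi11; ring.
  by rewrite ltr_wpDr // mulr_gt0 // subr_gt0.
Qed.

Lemma Phi_eq (N : nat) (P0 P1 Pd Pf alpha P10 P01 : R) :
  0 < P0 -> 0 < P1 ->
  0 < Pf -> Pf < Pd -> Pd < 1 -> 0 <= alpha ->
  0 <= P10 <= 1 -> 0 <= P01 <= 1 -> alpha * (P10 + P01) < 1 ->
  Phi N P0 P1 Pd Pf alpha P10 P01 = E (pi10 alpha P10 P01 Pf) (pi11 alpha P10 P01 Pd) N P0 P1.
Proof.
move=> h0 h1 hf hfd hd ha hx hy hs.
have [p1 p2 p3] := pi_props _ _ _ _ _ hf hfd hd ha hx hy hs.
by rewrite /Phi /Tthr /=; apply: PE_E.
Qed.

End Aux.

Theorem lemma6 (R : realType) (N : nat) (P0 P1 Pd Pf alpha : R) :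
  0 < P0 < 1 -> 0 < P1 < 1 -> P0 + P1 = 1 ->
  0 < Pf -> Pf < Pd -> Pd < 1 ->
  0 <= alpha -> alpha <= 1 / 2 ->
  (forall P10 P10' P01 : R,
      0 <= P10 <= 1 -> 0 <= P10' <= 1 -> 0 <= P01 <= 1 ->
      alpha * (P10 + P01) < 1 -> alpha * (P10' + P01) < 1 ->
      P10 <= P10' ->
      Phi N P0 P1 Pd Pf alpha P10 P01 <= Phi N P0 P1 Pd Pf alpha P10' P01) /\
  (forall P10 P01 P01' : R,
      0 <= P10 <= 1 -> 0 <= P01 <= 1 -> 0 <= P01' <= 1 ->
      alpha * (P10 + P01) < 1 -> alpha * (P10 + P01') < 1 ->
      P01 <= P01' ->
      Phi N P0 P1 Pd Pf alpha P10 P01 <= Phi N P0 P1 Pd Pf alpha P10 P01').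
Proof.
move=> /andP[h0 _] /andP[h1 _] _ hf hfd hd ha _.
split.
- move=> P10 P10' P01 hx hx' hy hs hs' hle.
  rewrite (Phi_eq _ _ _ _ _ _ _ _ _ h0 h1 hf hfd hd ha hx hy hs) (Phi_eq _ _ _ _ _ _ _ _ _ h0 h1 hf hfd hd ha hx' hy hs').
  set a := alpha * P10; set a' := alpha * P10'; set b := alpha * P01.
  have hc : 0 < 1 - a - b by rewrite /a /b; rewrite mulrDr in hs; lra.
  have hc' : 1 - a - b != 0 by rewrite gt_eqF.
  set d := (a' - a) * (1 - b) / (1 - a - b).
  set e := b * (a' - a) / (1 - a - b).
  have hA : 0 <= a by rewrite mulr_ge0 //; case/andP: hx.
  have hB : 0 <= b by rewrite mulr_ge0 //; case/andP: hy.
  have hB1 : b <= 1 by rewrite /b; case/andP: hy => _ ?; nra.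
  have haa : 0 <= a' - a by rewrite subr_ge0 /a /a' ler_wpM2l.
  have hs2 : a' + b < 1 by rewrite /a' /b -mulrDr.
  have hdd : 0 <= d <= 1.
    apply/andP; split; first by apply: divr_ge0; [apply: mulr_ge0 => //; lra | lra].
    rewrite /d ler_pdivrMr // mul1r; nra.
  have he : 0 <= e <= 1.
    apply/andP; split; first by apply: divr_ge0; [apply: mulr_ge0 => //; lra | lra].
    rewrite /e ler_pdivrMr // mul1r; nra.
  have -> : pi10 alpha P10' P01 Pf =
      pi10 alpha P10 P01 Pf * (1 - e) + (1 - pi10 alpha P10 P01 Pf) * d.
    rewrite /pi10 /d /e /a /a' /b; field; exact: hc'.
  have -> : pi11 alpha P10' P01 Pd =
      pi11 alpha P10 P01 Pd * (1 - e) + (1 - pi11 alpha P10 P01 Pd) * d.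
    rewrite /pi11 /d /e /a /a' /b; field; exact: hc'.
  exact: E_garble.
- move=> P10 P01 P01' hx hy hy' hs hs' hle.
  rewrite (Phi_eq _ _ _ _ _ _ _ _ _ h0 h1 hf hfd hd ha hx hy hs) (Phi_eq _ _ _ _ _ _ _ _ _ h0 h1 hf hfd hd ha hx hy' hs').
  set a := alpha * P10; set b := alpha * P01; set b' := alpha * P01'.
  have hc : 0 < 1 - a - b by rewrite /a /b; rewrite mulrDr in hs; lra.
  have hc' : 1 - a - b != 0 by rewrite gt_eqF.
  set d := a * (b' - b) / (1 - a - b).
  set e := (b' - b) * (1 - a) / (1 - a - b).
  have hA : 0 <= a by rewrite mulr_ge0 //; case/andP: hx.
  have hB : 0 <= b by rewrite mulr_ge0 //; case/andP: hy.
  have hbb : 0 <= b' - b by rewrite subr_ge0 /b /b' ler_wpM2l.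
  have hs2 : a + b' < 1 by rewrite /a /b' -mulrDr.
  have hdd : 0 <= d <= 1.
    apply/andP; split; first by apply: divr_ge0; [apply: mulr_ge0 => //; lra | lra].
    rewrite /d ler_pdivrMr // mul1r; nra.
  have he : 0 <= e <= 1.
    apply/andP; split; first by apply: divr_ge0; [apply: mulr_ge0 => //; lra | lra].
    rewrite /e ler_pdivrMr // mul1r; nra.
  have -> : pi10 alpha P10 P01' Pf =
      pi10 alpha P10 P01 Pf * (1 - e) + (1 - pi10 alpha P10 P01 Pf) * d.
    rewrite /pi10 /d /e /a /b' /b; field; exact: hc'.
  have -> : pi11 alpha P10 P01' Pd =
      pi11 alpha P10 P01 Pd * (1 - e) + (1 - pi11 alpha P10 P01 Pd) * d.
    rewrite /pi11 /d /e /a /b' /b; field; exact: hc'.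
  exact: E_garble.
Qed.
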